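(* Let $(X,d)$ be an $F$-space whose metric $d$ is non-decreasing, and let $\{A_n\}$ be an approximation scheme in $X$. Then the following are equivalent: (i) $\{A_n\}$ fails Shapiro's theorem on $X$, i.e. there exists a sequence $\{\varepsilon_n\}\searrow 0$ such that for every $x\in X$ there is a constant $C(x)>0$ with $E(x,A_n)\le C(x)\varepsilon_n$ for all $n\in\mathbb{N}$; (ii) there exists $r_0>0$ such that $\{A_n\}$ fails Shapiro's theorem uniformly on the ball $B(0,r_0)$, i.e. there exists $\{\varepsilon_n\}\searrow 0$ with $E(x,A_n)\le\varepsilon_n$ for all $n\in\mathbb{N}$ and all $x\in B(0,r_0)$. Consequently, $\{A_n\}$ satisfies Shapiro's theorem on $X$ (i.e. for every $\{\varepsilon_n\}\searrow0$ there exists $x\in X$ with $E(x,A_n)\neq\mathbf{O}(\varepsilon_n)$) if and only if $\inf_{n\in\mathbb{N}}E(B(0,r),A_n)>0$ for all $r>0$.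
   Context: An $F$-space is a vector space $X$ (real or complex) with a translation-invariant metric $d$ making it a complete topological vector space. The metric $d$ is non-decreasing if $d(\alpha x,0)\le d(x,0)$ whenever $0\le\alpha\le1$ and $x\in X$. An approximation scheme in $X$ is a chain $A_0\subsetneq A_1\subsetneq\cdots\subsetneq X$ of subsets (all inclusions strict) such that: (A1) there is $K:\mathbb{N}\to\mathbb{N}$ with $K(n)\ge n$ and $A_n+A_n\subseteq A_{K(n)}$ for all $n$; (A2) $\lambda A_n\subseteq A_n$ for all $n$ and all scalars $\lambda$; (A3) $\bigcup_n A_n$ is dense in $X$. For $x\in X$ and $A\subseteq X$, $E(x,A)=\inf_{a\in A}d(x,a)$; for $B\subseteq X$, $E(B,A)=\sup_{b\in B}E(b,A)$. $B(x,r)=\{y\in X:d(x,y)\le r\}$ is the closed ball. The notation $\{\varepsilon_n\}\searrow0$ means $\varepsilon_0\ge\varepsilon_1\ge\cdots\ge0$ and $\lim_n\varepsilon_n=0$. *)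

(* Defs.v *)
From HB Require Import structures.
From mathcomp Require Import all_boot all_order all_algebra.
From mathcomp Require Import all_classical all_reals.
From mathcomp Require Import ereal.
Set Implicit Arguments. Unset Strict Implicit. Unset Printing Implicit Defensive.
Import Order.TTheory GRing.Theory Num.Theory.
Local Open Scope ring_scope.
Local Open Scope classical_set_scope.

(* Scalars: K (a num field, archimedean hypothesis in the theorem; covers R and C).
   Metric values: R : realType.  V : a K-vector space. *)

Section Defs.
Variables (R : realType) (K : numFieldType) (V : lmodType K).

Definition dconv (d : V -> V -> R) (x_ : nat -> V) (x : V) : Prop :=
  forall e : R, 0 < e -> exists N : nat, forall k, (N <= k)%N -> d (x_ k) x < e.

Definition Kconv (l_ : nat -> K) (l : K) : Prop :=
  forall e : K, 0 < e -> exists N : nat, forall k, (N <= k)%N -> `|l_ k - l| < e.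

Definition dcauchy (d : V -> V -> R) (x_ : nat -> V) : Prop :=
  forall e : R, 0 < e -> exists N : nat, forall m n, (N <= m)%N -> (N <= n)%N ->
    d (x_ m) (x_ n) < e.

Definition Fspace (d : V -> V -> R) : Prop :=
  (forall x y, d x y = 0 <-> x = y) /\
  (forall x y, d x y = d y x) /\
  (forall x y z, d x z <= d x y + d y z) /\
  (forall x y z, d (x + z) (y + z) = d x y) /\
  (forall x_ : nat -> V, dcauchy d x_ -> exists x, dconv d x_ x) /\
  (forall (x_ y_ : nat -> V) x y, dconv d x_ x -> dconv d y_ y ->
          dconv d (fun k => x_ k + y_ k) (x + y)) /\
  (forall (l_ : nat -> K) (x_ : nat -> V) l x, Kconv l_ l -> dconv d x_ x ->
          dconv d (fun k => l_ k *: x_ k) (l *: x)).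

Definition nondecreasing_metric (d : V -> V -> R) : Prop :=
  forall (a : K) (x : V), 0 <= a -> a <= 1 -> d (a *: x) 0 <= d x 0.

Definition approx_scheme (d : V -> V -> R) (A : nat -> set V) : Prop :=
  [/\ (forall n, A n `<=` A n.+1 /\ exists x, A n.+1 x /\ ~ A n x),
      (exists Kf : nat -> nat, forall n, (n <= Kf n)%N /\
          forall a b, A n a -> A n b -> A (Kf n) (a + b)),
      (forall n (l : K) a, A n a -> A n (l *: a))
    & (forall x (e : R), 0 < e -> exists n a, A n a /\ d x a < e)].

(* E(x, A) = inf_{a in A} d(x, a), in the extended reals (inf of empty = +oo) *)
Definition Edist (d : V -> V -> R) (x : V) (A : set V) : \bar R :=
  ereal_inf [set (d x a)%:E | a in A].

Definition Eset (d : V -> V -> R) (B A : set V) : \bar R :=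
  ereal_sup [set Edist d b A | b in B].

Definition cball (d : V -> V -> R) (x : V) (r : R) : set V := [set y | d x y <= r].

End Defs.

Definition decr_to0 (R : realType) (eps : nat -> R) : Prop :=
  [/\ (forall n, 0 <= eps n), (forall n, eps n.+1 <= eps n)
    & (forall e : R, 0 < e -> exists N : nat, forall n, (N <= n)%N -> eps n < e)].

(* Main.v *)
Require Import Defs.
From HB Require Import structures.
From mathcomp Require Import all_boot all_order all_algebra.
From mathcomp Require Import all_classical all_reals.
From mathcomp Require Import ereal lra zify.
Set Implicit Arguments. Unset Strict Implicit. Unset Printing Implicit Defensive.
Import Order.TTheory GRing.Theory Num.Theory.
Local Open Scope ring_scope.
Local Open Scope classical_set_scope.

Definition Ple (R : realType) (K : numFieldType) (V : lmodType K)
  (d : V -> V -> R) (x : V) (A : set V) (t : R) :=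
  forall e : R, 0 < e -> exists a, A a /\ d x a < t + e.

Lemma Edist_leP (R : realType) (K : numFieldType) (V : lmodType K)
  (d : V -> V -> R) x A t : (Edist d x A <= t%:E)%E <-> Ple d x A t.
Proof.
split.
  move=> H e e0.
  have : (Edist d x A < (t + e)%:E)%E.
    by apply: le_lt_trans H _; rewrite lte_fin ltrDl.
  by move/ereal_inf_lt => [_ [a Aa <-]]; rewrite lte_fin => h; exists a.
move=> H; apply/lee_addgt0Pr => e e0; apply: ereal_inf_le.
have [a [Aa h]] := H e e0; exists (d x a)%:E; first by exists a.
by rewrite -EFinD lee_fin ltW.
Qed.

Lemma Ple_mono (R : realType) (K : numFieldType) (V : lmodType K)
  (d : V -> V -> R) x (A B : set V) (t s : R) :
  A `<=` B -> t <= s -> Ple d x A t -> Ple d x B s.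
Proof.
move=> AB ts H e e0; have [a [Aa h]] := H e e0; exists a; split; first exact: AB.
by apply: lt_le_trans h _; rewrite lerD2r.
Qed.

Lemma nestedA (K : numFieldType) (V : lmodType K) (A : nat -> set V) :
  (forall n, A n `<=` A n.+1) -> forall n k, (n <= k)%N -> A n `<=` A k.
Proof.
move=> h n k /subnK <-; elim: (k - n)%N => [|j IH] //= x /IH.
by rewrite addSn; exact: h.
Qed.

Lemma d_ge0 (R : realType) (K : numFieldType) (V : lmodType K) (d : V -> V -> R) :
  Fspace d -> forall x y, 0 <= d x y.
Proof.
move=> [deq [dsym [dtri _]]] x y.
have := dtri x y x; rewrite (dsym y x) (proj2 (deq x x) erefl) => h.
by rewrite -(@pmulr_rge0 _ 2) // mulr2n mulrDl mul1r.
Qed.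

Lemma d_mulrn (R : realType) (K : numFieldType) (V : lmodType K) (d : V -> V -> R) :
  Fspace d -> forall v w k, d (v *+ k) (w *+ k) <= k%:R * d v w.
Proof.
move=> [deq [dsym [dtri [dtr _]]]] v w; elim=> [|k IH].
  by rewrite !mulr0n (proj2 (deq 0 0) erefl) mul0r.
rewrite !mulrS.
apply: le_trans (dtri _ (w + v *+ k) _) _.
rewrite dtr (addrC w) (addrC w) dtr.
by rewrite mulrDl mul1r lerD2l.
Qed.

Lemma d_sub (R : realType) (K : numFieldType) (V : lmodType K) (d : V -> V -> R) :
  Fspace d -> forall x y a b, d x (a - b) <= d (y + x) a + d y b.
Proof.
move=> [deq [dsym [dtri [dtr _]]]] x y a b.
apply: le_trans (dtri _ (a - y) _) _; apply: lerD.
  by rewrite -(dtr x (a - y) y) subrK addrC.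
rewrite -(dtr _ _ (- a)) addrC addKr addrC addKr.
rewrite -(dtr _ _ (y + b)) addKr (addrC y b) addKr dsym.
done.
Qed.

Lemma inv_small (F : numFieldType) (arch : forall x : F, exists n : nat, `|x| < n%:R)
  (e : F) : 0 < e -> exists N : nat, forall k, (N <= k)%N -> (k.+1%:R : F)^-1 < e.
Proof.
move=> e0; have [n hn] := arch e^-1; exists n => k nk.
rewrite invf_plt ?posrE ?ltr0Sn //.
rewrite ger0_norm ?invr_ge0 ?ltW // in hn.
by apply: lt_le_trans hn _; rewrite ler_nat; apply: leqW.
Qed.

Lemma archR (R : realType) : forall x : R, exists n : nat, `|x| < n%:R.
Proof. by move=> x; exists (Num.Def.archi_bound `|x|); apply: archi_boundP. Qed.

Lemma ii_to_i (R : realType) (K : numFieldType) (V : lmodType K)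
  (d : V -> V -> R) (A : nat -> set V)
  (Karchi : forall k : K, exists n : nat, `|k| < n%:R)
  (hF : Fspace d) (hsc : forall n (l : K) a, A n a -> A n (l *: a))
  (r0 : R) (eps : nat -> R) : 0 < r0 ->
  (forall n x, cball d 0 r0 x -> Ple d x (A n) (eps n)) ->
  forall x, exists C : R, 0 < C /\ forall n, Ple d x (A n) (C * eps n).
Proof.
move=> r00 Hb x.
have hF' := hF; move: hF' => [deq [dsym [dtri [dtr [dcomp [dadd dsc]]]]]].
have kc : Kconv (fun k : nat => (k.+1%:R : K)^-1) 0.
  move=> e e0; have [N hN] := inv_small Karchi e0; exists N => k nk.
  by rewrite subr0 ger0_norm ?invr_ge0 ?ler0n //; apply: hN.
have cx : dconv d (fun _ : nat => x) x.
  by move=> e e0; exists 0%N => k _; rewrite (proj2 (deq x x) erefl).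
have [N hN] := dsc _ _ _ _ kc cx _ r00.
have := hN N (leqnn N); rewrite scale0r => hy.
set y := (N.+1%:R : K)^-1 *: x in hy.
have by0 : cball d 0 r0 y by rewrite /cball /= dsym ltW.
exists N.+1%:R; split; first by rewrite ltr0Sn.
move=> n e e0.
have eC : 0 < e / N.+1%:R by rewrite divr_gt0 ?ltr0Sn.
have [a [Aa ha]] := Hb n y by0 _ eC.
exists (a *+ N.+1); split; first by rewrite -scaler_nat; apply: hsc.
have -> : x = y *+ N.+1.
  by rewrite /y -scaler_nat scalerA mulfV ?scale1r // pnatr_eq0.
apply: le_lt_trans (d_mulrn hF _ _ _) _.
move: ha; rewrite -(ltr_pM2l (ltr0Sn R N)) => /lt_le_trans; apply.
by rewrite mulrDr mulrCA mulfV ?mulr1 // pnatr_eq0.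
Qed.

Lemma baire (R : realType) (K : numFieldType) (V : lmodType K)
  (d : V -> V -> R) (hF : Fspace d) (G : nat -> V -> Prop)
  (Gcl : forall m z, (forall r, 0 < r -> exists w, d z w <= r /\ G m w) -> G m z)
  (Gcov : forall z, exists m, G m z) :
  exists m y s, 0 < s /\ forall z, d y z <= s -> G m z.
Proof.
have hF' := hF; move: hF' => [deq [dsym [dtri [dtr [dcomp _]]]]].
have d0 : forall x, d x x = 0 by move=> x; apply/deq.
apply: contrapT => Hno.
have step : forall t : nat * V * R, exists zs : V * R, 0 < t.2 ->
   [/\ 0 < zs.2, zs.2 <= t.2 / 2, d t.1.2 zs.1 <= t.2 / 2 &
      forall w, d zs.1 w <= zs.2 -> ~ G t.1.1 w].
  move=> [[m y] s] /=.
  have [s0|s0] := boolP (0 < s); last by exists (y, s).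
  have [z [yz nG]] : exists z, d y z <= s / 2 /\ ~ G m z.
    apply: contrapT => hn; apply: Hno; exists m, y, (s / 2); split.
      by rewrite divr_gt0.
    move=> z yz; apply: contrapT => nG; apply: hn; by exists z.
  have [r [r0 hr]] : exists r, 0 < r /\ forall w, d z w <= r -> ~ G m w.
    apply: contrapT => hn; apply: nG; apply: Gcl => r r0.
    apply: contrapT => hw; apply: hn; exists r; split => // w zw Gw.
    by apply: hw; exists w.
  exists (z, Num.min r (s / 2)) => _ /=; split => //.
  - by rewrite lt_min r0 divr_gt0.
  - by rewrite ge_min lexx orbT.
  - by move=> w; rewrite le_min => /andP[/hr].
have [f hf] := choice step.
pose sq := fix sq (k : nat) : V * R :=
  if k is k'.+1 then f (k', (sq k').1, (sq k').2) else (0, 1).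
have sqS : forall k, sq k.+1 = f (k, (sq k).1, (sq k).2) by [].
have pos : forall k, 0 < (sq k).2.
  elim=> [|k IH]; first by rewrite /= ltr01.
  by rewrite sqS; case: (hf (k, (sq k).1, (sq k).2) IH).
have P k := hf (k, (sq k).1, (sq k).2) (pos k).
have nest : forall k w, d (sq k.+1).1 w <= (sq k.+1).2 -> d (sq k).1 w <= (sq k).2.
  move=> k w; rewrite sqS; case: (P k) => /= _ h1 h2 _ h3.
  apply: le_trans (dtri _ (f (k, (sq k).1, (sq k).2)).1 _) _.
  by apply: le_trans (lerD h2 (le_trans h3 h1)) _; rewrite -splitr.
have nestj : forall j k w, d (sq (j + k)).1 w <= (sq (j + k)).2 ->
    d (sq k).1 w <= (sq k).2.
  elim=> [|j IH] k w //= h; apply: IH; exact: nest.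
have close : forall k m, (k <= m)%N -> d (sq k).1 (sq m).1 <= (sq k).2.
  move=> k m /subnK <-; apply: (nestj (m - k)%N); rewrite d0; exact: ltW.
have small : forall k, (sq k).2 <= (k.+1%:R)^-1.
  elim=> [|k IH]; first by rewrite /= invr1.
  rewrite sqS; case: (P k) => /= h0 h1 _ _; apply: le_trans h1 _.
  apply: le_trans (ler_wpM2r _ IH) _; first by rewrite invr_ge0.
  rewrite -invfM lef_pV2 ?posrE ?mulr_gt0 ?ltr0Sn //.
  by rewrite -natrM ler_nat; lia.
have cauchy : dcauchy d (fun k => (sq k).1).
  move=> e e0; have e20 : 0 < e / 2 by rewrite divr_gt0.
  have [N hN] := inv_small (@archR R) e20; exists N => m n Nm Nn.
  apply: le_lt_trans (dtri _ (sq N).1 _) _; rewrite dsym.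
  have h1 := le_trans (close _ _ Nm) (small N).
  have h2 := le_trans (close _ _ Nn) (small N).
  have h3 := hN N (leqnn N).
  rewrite (splitr e); apply: le_lt_trans (lerD h1 h2) _.
  by apply: ltrD.
have [y hy] := dcomp _ cauchy.
have lim : forall k, d (sq k).1 y <= (sq k).2.
  move=> k; apply/ler_addgt0Pr => e e0.
  have [N hN] := hy e e0.
  apply: le_trans (dtri _ (sq (maxn N k)).1 _) _; apply: lerD.
    by apply: close; rewrite leq_maxr.
  by apply/ltW/hN; rewrite leq_maxl.
have [m Gm] := Gcov y.
case: (P m) => _ _ _; rewrite -sqS => hG; apply: (hG y) => //.
Qed.

Lemma seqh (Kf : nat -> nat) : exists h : nat -> nat,
  [/\ (forall k, (h k <= h k.+1)%N), (forall k, h k = 0%N \/ (Kf (h k) <= k)%N)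
    & (forall N, exists k0, forall k, (k0 <= k)%N -> (N <= h k)%N)].
Proof.
pose h := fix h (k : nat) : nat :=
  if k is k'.+1 then (if (Kf (h k').+1 <= k'.+1)%N then (h k').+1 else h k') else 0%N.
have hS : forall k, h k.+1 = if (Kf (h k).+1 <= k.+1)%N then (h k).+1 else h k by [].
have mono : forall k, (h k <= h k.+1)%N.
  by move=> k; rewrite hS; case: ifP.
have monoh : {homo h : i j / (i <= j)%N}.
  by apply: homo_leq => //; exact: leq_trans.
exists h; split => //.
  elim=> [|k IH]; first by left.
  rewrite hS; case: ifP => [h1|_]; first by right.
  by case: IH => [->|h2]; [left | right; apply: leqW].
elim=> [|N [k0 IH]]; first by exists 0%N.
pose k1 := maxn k0 (Kf N.+1).
have [h1|h1] := leqP N.+1 (h k1).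
  by exists k1 => k /monoh; apply: leq_trans.
have eN : h k1 = N by apply/eqP; rewrite eqn_leq -ltnS h1 IH // leq_maxl.
exists k1.+1 => k /monoh; apply: leq_trans.
by rewrite hS eN ifT // leqW // leq_maxr.
Qed.

Lemma eps_anti (R : realType) (eps : nat -> R) : decr_to0 eps ->
  forall i j, (i <= j)%N -> eps j <= eps i.
Proof.
case=> _ hd _ i j /subnK <-; elim: (j - i)%N => [|k IH] //=.
by rewrite addSn; apply: le_trans (hd _) IH.
Qed.

Lemma i_to_ii (R : realType) (K : numFieldType) (V : lmodType K)
  (d : V -> V -> R) (A : nat -> set V) (hF : Fspace d) (hA : approx_scheme d A)
  (eps : nat -> R) (he : decr_to0 eps)
  (H : forall x, exists C : R, 0 < C /\ forall n, Ple d x (A n) (C * eps n)) :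
  exists r0 : R, 0 < r0 /\ exists eps' : nat -> R, decr_to0 eps' /\
    forall n x, cball d 0 r0 x -> Ple d x (A n) (eps' n).
Proof.
have hF' := hF; move: hF' => [deq [dsym [dtri [dtr _]]]].
have d0 : forall x, d x x = 0 by move=> x; apply/deq.
case: hA => hnest [Kf hKf] hsc _.
have nest : forall n k, (n <= k)%N -> A n `<=` A k := nestedA (fun n => (hnest n).1).
have he2 := he; case: he2 => eps0 _ elim0.
have A0 : forall n, A n 0.
  have [C [_ hC]] := H 0; have [a [Aa _]] := hC 0%N 1 ltr01.
  move=> n; apply: (nest 0%N) => //; rewrite -(scale0r a); exact: hsc.
pose G := fun (m : nat) z => forall n, Ple d z (A n) (m%:R * eps n).
have [m [y [s [s0 hs]]]] : exists m y s, 0 < s /\ forall z, d y z <= s -> G m z.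
  apply: (@baire R K V d hF G).
  - move=> m z hz n e e0.
  have e2 : 0 < e / 2 by rewrite divr_gt0.
  have [w [zw Gw]] := hz _ e2.
  have [a [Aa ha]] := Gw n _ e2.
  exists a; split => //; apply: le_lt_trans (dtri z w a) _; lra.
  - move=> z; have [C [C0 hC]] := H z.
  exists (Num.Def.archi_bound C) => n; apply: (Ple_mono _ _ (hC n)) => //.
  by apply: ler_wpM2r => //; apply/ltW/archi_boundP/ltW.
have Ga : forall x, d 0 x <= s -> forall k, Ple d x (A k) s.
  by move=> x hx k e e0; exists 0; split => //; rewrite dsym; lra.
have Gb : forall x, d 0 x <= s -> forall n, Ple d x (A (Kf n)) ((2 * m%:R) * eps n).
  move=> x hx n e e0.
  have e2 : 0 < e / 2 by rewrite divr_gt0.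
  have hyx : d y (y + x) <= s by rewrite -{1}(add0r y) (addrC y x) dtr.
  have hyy : d y y <= s by rewrite d0 ltW.
  have [a [Aa ha]] := hs _ hyx n _ e2; have [b [Ab hb]] := hs _ hyy n _ e2.
  exists (a - b); split.
    by rewrite -scaleN1r; apply: (hKf n).2 => //; exact: hsc.
  have := d_sub hF x y a b.
  rewrite -mulrA mulr_natl mulr2n; lra.
have [h [hmono hinv hdiv]] := seqh Kf.
pose c : R := 2 * m%:R.
have c0 : 0 <= c by rewrite mulr_ge0 ?ler0n.
pose M := s + c * eps 0.
exists s; split => //.
exists (fun k => if h k == 0%N then M else c * eps (h k)); split.
  split.
  - move=> k /=; case: ifP => _; last exact: mulr_ge0 c0 (eps0 _).
    by rewrite /M addr_ge0 ?(ltW s0) ?mulr_ge0 ?eps0.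
  - move=> k /=; have hm := hmono k.
    case: ifP => [/eqP hk1|hk1].
      have -> : h k = 0%N by apply/eqP; rewrite -leqn0 -hk1.
      by rewrite eqxx.
    case: ifP => hk.
      apply: le_trans (ler_wpM2l c0 (eps_anti he (leq0n _))) _.
      by rewrite /M; apply: ler_wpDl; [exact: ltW | ].
    exact: (ler_wpM2l c0 (eps_anti he hm)).
  - move=> e epos.
    have c1 : 0 < c + 1 by rewrite ltr_wpDl.
    have [N hN] := elim0 _ (divr_gt0 epos c1).
    have [k0 hk0] := hdiv (maxn N 1).
    exists k0 => k kk; have hk := hk0 k kk.
    have hk1 : (h k == 0%N) = false.
      by apply/negbTE; rewrite -lt0n; apply: leq_trans hk; rewrite leq_maxr.
    rewrite hk1.
    have := hN (h k) (leq_trans (leq_maxl _ _) hk).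
    rewrite ltr_pdivlMr // => /(le_lt_trans _); apply.
    by rewrite mulrDr mulr1 (mulrC (eps _)) lerDl eps0.
move=> k x hx; rewrite /cball in hx.
case: ifP => [_|/negbT hk].
  by apply: (Ple_mono _ _ (Ga x hx k)) => //; rewrite /M -{1}(addr0 s) lerD2l mulr_ge0 ?eps0.
case: (hinv k) => [hk0|hK]; first by rewrite hk0 in hk.
by apply: (Ple_mono _ _ (Gb x hx (h k))) => //; apply: nest.
Qed.

Unset Implicit Arguments.

Theorem mainTheorem2 (R : realType) (K : numFieldType) (V : lmodType K)
  (d : V -> V -> R) (A : nat -> set V)
  (Karchi : forall k : K, exists n : nat, `|k| < n%:R)
  (hF : Fspace d) (hnd : nondecreasing_metric d) (hA : approx_scheme d A) :
  ((* (i) fails Shapiro's theorem *)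
   (exists eps : nat -> R, decr_to0 eps /\
      forall x : V, exists C : R, 0 < C /\
        forall n, (Edist d x (A n) <= (C * eps n)%:E)%E)
   <->
   (* (ii) fails Shapiro's theorem uniformly on some ball B(0, r0) *)
   (exists r0 : R, 0 < r0 /\ exists eps : nat -> R, decr_to0 eps /\
      forall n x, cball d 0 r0 x -> (Edist d x (A n) <= (eps n)%:E)%E))
  /\
  (A 0%N !=set0 ->
   ((* satisfies Shapiro's theorem *)
    (forall eps : nat -> R, decr_to0 eps -> exists x : V,
       ~ (exists C : R, 0 < C /\ forall n, (Edist d x (A n) <= (C * eps n)%:E)%E))
    <->
    (forall r : R, 0 < r ->
       (0 < ereal_inf (range (fun n => Eset d (cball d 0 r) (A n))))%E))).
Proof.
have hF' := hF; move: hF' => [deq [dsym [dtri _]]].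
have d0 : forall x, d x x = 0 by move=> x; apply/deq.
have hA' := hA; case: hA' => hnest _ hsc _.
have nest : forall n k, (n <= k)%N -> A n `<=` A k := nestedA (fun n => (hnest n).1).
have part1 :
   (exists eps : nat -> R, decr_to0 eps /\
      forall x : V, exists C : R, 0 < C /\
        forall n, (Edist d x (A n) <= (C * eps n)%:E)%E)
   <->
   (exists r0 : R, 0 < r0 /\ exists eps : nat -> R, decr_to0 eps /\
      forall n x, cball d 0 r0 x -> (Edist d x (A n) <= (eps n)%:E)%E).
  split.
    move=> [eps [he H]].
    have [r0 [r00 [eps' [he' H2]]]] := i_to_ii hF hA he
      (fun x => let: ex_intro C (conj C0 hC) := H x in
        ex_intro _ C (conj C0 (fun n => proj1 (Edist_leP _ _ _ _) (hC n)))).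
    exists r0; split => //; exists eps'; split => // n x bx.
    by apply/Edist_leP; exact: H2.
  move=> [r0 [r00 [eps [he H]]]]; exists eps; split => // x.
  have [C [C0 hC]] := ii_to_i Karchi hF hsc r00
    (fun n x bx => proj1 (Edist_leP _ _ _ _) (H n x bx)) x.
  by exists C; split => // n; apply/Edist_leP.
split => // A0ne.
have A0 : forall n, A n 0.
  case: A0ne => a Aa n; apply: (nest 0%N) => //; rewrite -(scale0r a); exact: hsc.
pose Es r n := Eset d (cball d 0 r) (A n).
have Es_ge0 : forall r n, 0 < r -> (0 <= Es r n)%E.
  move=> r n r0; apply: le_trans (ereal_sup_ubound _) => /=; last first.
    by exists 0 => //; rewrite /cball /= d0 ltW.
  apply: le_ereal_inf_tmp => _ [a _ <-]; rewrite lee_fin; exact: d_ge0.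
have Es_le : forall r n, (Es r n <= r%:E)%E.
  move=> r n; apply: ge_ereal_sup => _ [b bb <-].
  apply: ge_ereal_inf; exists (d b 0)%:E; first by exists 0.
  by rewrite lee_fin dsym.
have Es_anti : forall r n k, (n <= k)%N -> (Es r k <= Es r n)%E.
  move=> r n k nk; apply: ge_ereal_sup => _ [b bb <-].
  apply: le_trans (ereal_sup_ubound _); last by exists b.
  apply: le_ereal_inf_tmp => _ [a Aa <-].
  by apply: ereal_inf_lbound; exists a => //; apply: (nest n k).
split.
  move=> Sh r r0; rewrite ltNge; apply/negP => hinf.
  have fin : forall n, Es r n \is a fin_num.
    move=> n; rewrite ge0_fin_numE ?Es_ge0 //.
    by apply: le_lt_trans (Es_le r n) _; exact: ltry.
  pose eps n := fine (Es r n).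
  have epsE : forall n, (eps n)%:E = Es r n by move=> n; rewrite fineK.
  have he : decr_to0 eps.
    split.
    - by move=> n; rewrite -lee_fin epsE Es_ge0.
    - by move=> n; rewrite -lee_fin !epsE Es_anti.
    - move=> e e0.
      have : (ereal_inf (range (fun n => Eset d (cball d 0 r) (A n))) < e%:E)%E.
        by apply: le_lt_trans hinf _; rewrite lte_fin.
      move/ereal_inf_lt => [_ [n _ <-]] hn; exists n => k nk.
      by rewrite -lte_fin epsE; apply: le_lt_trans (Es_anti r n k nk) hn.
  have [eps2 [he2 H2]] : exists eps : nat -> R, decr_to0 eps /\
      forall x : V, exists C : R, 0 < C /\
        forall n, (Edist d x (A n) <= (C * eps n)%:E)%E.
    apply/part1; exists r; split => //; exists eps; split => // n x bx.
    by rewrite epsE; apply: ereal_sup_ubound; exists x.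
  have [x hx] := Sh eps2 he2; exact: hx.
move=> Hinf eps he; apply: contrapT => hno.
have Hi : exists eps : nat -> R, decr_to0 eps /\
      forall x : V, exists C : R, 0 < C /\
        forall n, (Edist d x (A n) <= (C * eps n)%:E)%E.
  exists eps; split => // x; apply: contrapT => hx; apply: hno; by exists x.
have [r0 [r00 [eps' [he' H']]]] := proj1 part1 Hi.
have hle : forall n, (ereal_inf (range (fun n => Eset d (cball d 0 r0) (A n)))
     <= (eps' n)%:E)%E.
  move=> n; apply: le_trans (ereal_inf_lbound _) _; first by exists n.
  by apply: ge_ereal_sup => _ [b bb <-]; exact: H'.
have hpos := Hinf r0 r00.
move: hle hpos.
case: (ereal_inf _) => [c| |] hle hpos //.
  rewrite lte_fin in hpos.
  case: he' => _ _ /(_ c hpos) [N hN].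
  have := hle N; rewrite lee_fin => h1.
  have := hN N (leqnn N); rewrite ltNge h1 //.
by have := hle 0%N.
Qed.
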